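(* Let $K$ be a perfect field with $\mathrm{char}(K)\neq 2$ and algebraic closure $K_a$. Let $f(t)\in K[t]$ be a separable irreducible polynomial of degree $7$ whose Galois group $\mathrm{Gal}(f)$ is either $\mathbf{S}_7$ or $\mathbf{A}_7$, and let $\mathfrak{R}_f\subset K_a$ be its set of $7$ roots. Then the $7$-element set $B_f=\{(\alpha^3:\alpha:1)\mid \alpha\in\mathfrak{R}_f\}\subset\mathbb{P}^2(K_a)$ is in general position, i.e. no three of its points lie on a line and no six of its points lie on a conic. *)

(* Defs.v *)
From mathcomp Require Import all_boot all_order all_algebra all_fingroup all_solvable all_field.
Set Implicit Arguments. Unset Strict Implicit. Unset Printing Implicit Defensive.
Import GRing.Theory.
Local Open Scope ring_scope.

(* A field F is perfect: either char 0, or char p and Frobenius is onto. *)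
Definition perfect_field (F : fieldType) : Prop :=
  forall p : nat, p \in [pchar F] -> forall x : F, exists y : F, y ^+ p = x.

(* The permutation group of the 7 labelled roots r induced by Gal(E/F):
   the Galois group of f viewed inside S_7 via the labelling r. *)
Definition gal_perm_group (F : fieldType) (L : splittingFieldType F)
    (E : {subfield L}) (r : 'I_7 -> L) : {set {perm 'I_7}} :=
  [set s : {perm 'I_7} | [exists g in 'Gal(E / 1%AS)%g,
      [forall i : 'I_7, g (r i) == r (s i)]]].

(* homogeneous coordinates in P^2(C) *)
Definition pt3 (C : fieldType) := (C * C * C)%type.

Definition cubic_pt (C : fieldType) (a : C) : pt3 C := (a ^+ 3, a, 1).

Definition on_line (C : fieldType) (l P : pt3 C) : bool :=
  l.1.1 * P.1.1 + l.1.2 * P.1.2 + l.2 * P.2 == 0.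

Definition nonzero_pt (C : fieldType) (l : pt3 C) : bool :=
  [|| l.1.1 != 0, l.1.2 != 0 | l.2 != 0].

Definition on_conic (C : fieldType) (q : 'I_6 -> C) (P : pt3 C) : bool :=
  let: (x, y, z) := P in
  q (inord 0) * x ^+ 2 + q (inord 1) * y ^+ 2 + q (inord 2) * z ^+ 2
  + q (inord 3) * (x * y) + q (inord 4) * (x * z) + q (inord 5) * (y * z) == 0.

Definition general_position7 (C : fieldType) (P : 'I_7 -> pt3 C) : Prop :=
  (forall i j k : 'I_7, i != j -> i != k -> j != k ->
     ~ exists l : pt3 C,
         [/\ nonzero_pt l, on_line l (P i), on_line l (P j) & on_line l (P k)])
  /\
  (forall S : {set 'I_7}, #|S| = 6 ->
     ~ exists q : 'I_6 -> C,
         (exists m, q m != 0) /\ (forall i, i \in S -> on_conic q (P i))).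

(* Main.v *)
Require Import Defs.
From mathcomp Require Import all_boot all_order all_algebra all_fingroup all_solvable all_field.
From mathcomp Require Import ring.
Import GRing.Theory.
Local Open Scope ring_scope.

Lemma line_sum (C : fieldType) (a b c : C) (l : pt3 C) :
  a != b -> a != c -> b != c -> nonzero_pt l ->
  on_line l (cubic_pt a) -> on_line l (cubic_pt b) -> on_line l (cubic_pt c) ->
  a + b + c = 0.
Proof.
case: l => [[u v] w] ab ac bc nz.
rewrite /on_line /cubic_pt /= => /eqP ea /eqP eb /eqP ec.
have h1 : (a - b) * (u * (a ^+ 2 + a * b + b ^+ 2) + v) = 0.
  have -> : (a - b) * (u * (a ^+ 2 + a * b + b ^+ 2) + v)
     = (u * a ^+ 3 + v * a + w * 1) - (u * b ^+ 3 + v * b + w * 1) by ring.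
  by rewrite ea eb subrr.
have h2 : (a - c) * (u * (a ^+ 2 + a * c + c ^+ 2) + v) = 0.
  have -> : (a - c) * (u * (a ^+ 2 + a * c + c ^+ 2) + v)
     = (u * a ^+ 3 + v * a + w * 1) - (u * c ^+ 3 + v * c + w * 1) by ring.
  by rewrite ea ec subrr.
move/eqP: h1; rewrite mulf_eq0 subr_eq0 (negbTE ab) /= => /eqP h1.
move/eqP: h2; rewrite mulf_eq0 subr_eq0 (negbTE ac) /= => /eqP h2.
have h3 : u * (b - c) * (a + b + c) = 0.
  have -> : u * (b - c) * (a + b + c)
     = (u * (a ^+ 2 + a * b + b ^+ 2) + v) - (u * (a ^+ 2 + a * c + c ^+ 2) + v)
    by ring.
  by rewrite h1 h2 subrr.
move/eqP: h3; rewrite !mulf_eq0 subr_eq0 (negbTE bc) orbF => /orP [/eqP u0|/eqP //].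
exfalso.
move: h1; rewrite u0 mul0r add0r => v0.
move: ea; rewrite u0 v0 !mul0r !add0r mulr1 => w0.
by move: nz; rewrite /nonzero_pt /= u0 v0 w0 eqxx.
Qed.

Lemma conic_sum (C : fieldType) (q : 'I_6 -> C) (rs : seq C) :
  size rs = 6%N -> uniq rs -> (exists m, q m != 0) ->
  (forall a, a \in rs -> on_conic q (cubic_pt a)) -> \sum_(a <- rs) a = 0.
Proof.
move=> srs urs [m qm] Hc.
pose cf := [:: q (inord 2); q (inord 5); q (inord 1); q (inord 4); q (inord 3); 0; q (inord 0)].
pose p : {poly C} := \poly_(i < 7) nth 0 cf i.
have rootp : all (root p) rs.
  apply/allP => a /Hc; rewrite /on_conic /cubic_pt /root => /eqP H.
  rewrite horner_poly !big_ord_recl big_ord0 /=; apply/eqP; apply: (etrans _ H).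
  rewrite /bump /=; ring.
have cp : forall k, p`_k = if (k < 7)%N then nth 0 cf k else 0.
  by move=> k; rewrite coef_poly.
have [p0|pn0] := eqVneq p 0.
  exfalso; move: qm.
  have Z : forall k, (k < 7)%N -> nth 0 cf k = 0.
    by move=> k kl; move: (cp k); rewrite p0 coef0 kl.
  rewrite -(inord_val m); case: m => [[|[|[|[|[|[|?]]]]]] Hm] //=;
    [ move: (Z 6%N isT) | move: (Z 2%N isT) | move: (Z 0%N isT)
    | move: (Z 4%N isT) | move: (Z 3%N isT) | move: (Z 1%N isT) ];
    by rewrite /= => ->; rewrite eqxx.
have := max_poly_roots pn0 rootp urs; rewrite srs => s6.
have s7 : size p = 7%N.
  by apply/eqP; rewrite eqn_leq s6 andbT; apply: size_poly.
have up : uniq_roots rs by rewrite uniq_rootsE.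
have E := all_roots_prod_XsubC (etrans s7 (congr1 S (esym srs))) rootp up.
have lc : lead_coef p = q (inord 0) by rewrite lead_coefE s7 cp.
have lc0 : lead_coef p != 0 by rewrite lead_coef_eq0.
have := cp 5%N; rewrite /= E coefZ.
have -> : 5%N = (size rs).-1 by rewrite srs.
rewrite coefPn_prod_XsubC ?srs // => /eqP.
by rewrite mulf_eq0 (negbTE lc0) /= oppr_eq0 => /eqP.
Qed.

Arguments line_sum {C a b c l}.
Arguments conic_sum {C q rs}.

Lemma exists_notin (X : {set 'I_7}) : (#|X| <= 3)%N -> exists y, y \notin X.
Proof.
move=> cX; apply/existsP; rewrite -negb_forall; apply/negP => /forallP H.
have : X = [set: 'I_7] by apply/setP => z; rewrite inE H.
by move=> XT; move: cX; rewrite XT cardsT card_ord.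
Qed.

Lemma gal_step (F : fieldType) (L : splittingFieldType F) (E : {subfield L})
    (r : 'I_7 -> L) :
  (gal_perm_group E r = [set: {perm 'I_7}] \/ gal_perm_group E r = ('Alt_('I_7))%g) ->
  forall i j k y : 'I_7, i != j -> k != y ->
  exists g : gal_of E, forall x, g (r x) = r ((tperm i j * tperm k y)%g x).
Proof.
move=> hG i j k y ij ky.
have : (tperm i j * tperm k y)%g \in gal_perm_group E r.
  case: hG => ->; first by rewrite inE.
  by rewrite Alt_even odd_permM !odd_tperm ij ky.
rewrite inE => /existsP [g /andP [_ /forallP H]].
by exists g => x; apply/eqP; apply: H.
Qed.

Arguments gal_step {F L E r}.

Theorem lemma1p3 (F : fieldType) (L : splittingFieldType F) (E : {subfield L})
    (C : closedFieldType) (phi : {rmorphism L -> C})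
    (f : {poly F}) (r : 'I_7 -> L) :
  perfect_field F ->
  (2 \notin [pchar F])%N ->
  separable_poly f ->
  irreducible_poly f ->
  size f = 8%N ->
  splittingFieldFor 1%AS (map_poly (in_alg L) f) E ->
  injective r ->
  (forall i, root (map_poly (in_alg L) f) (r i)) ->
  (gal_perm_group E r = [set: {perm 'I_7}] \/ gal_perm_group E r = ('Alt_('I_7))%g) ->
  general_position7 (fun i => cubic_pt (phi (r i))).
Proof.
move=> _ _ _ _ _ _ rinj _ hG.
have pinj : injective (fun i => phi (r i)).
  by move=> a b /fmorph_inj /rinj.
have pneq : forall a b, a != b -> phi (r a) != phi (r b).
  by move=> a b ab; apply: contra ab => /eqP /pinj ->.
split.
- move=> i j k ij ik jk [l [nz li lj lk]].
  have := line_sum (pneq _ _ ij) (pneq _ _ ik) (pneq _ _ jk) nz li lj lk.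
  rewrite -!rmorphD => /eqP; rewrite fmorph_eq0 => /eqP hs.
  have c3 : (#|[set i; j; k]| <= 3)%N.
    apply: (leq_trans (leq_card_setU _ _)); rewrite cards1 addn1 ltnS.
    by apply: (leq_trans (leq_card_setU _ _)); rewrite !cards1.
  have [y] := exists_notin _ c3.
  rewrite !inE !negb_or => /andP [/andP [yi yj] yk].
  have ky : k != y by rewrite eq_sym.
  have [g Hg] := gal_step hG _ _ _ _ ij ky.
  have si : (tperm i j * tperm k y)%g i = j.
    by rewrite permM tpermL tpermD // eq_sym.
  have sj : (tperm i j * tperm k y)%g j = i.
    by rewrite permM tpermR tpermD // eq_sym.
  have sk : (tperm i j * tperm k y)%g k = y.
    by rewrite permM (tpermD ik jk) tpermL.
  have gD : forall a b : L, g (a + b) = g a + g b by move=> a b; apply: linearD.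
  have g0 : g 0 = 0 by apply: linear0.
  have := congr1 g hs; rewrite !gD g0 !Hg si sj sk.
  have e : r i + r j + r k = r j + r i + r y -> r k = r y.
    by rewrite (addrC (r j)) => /addrI.
  move=> h; have := e (etrans hs (esym h)).
  by move/rinj => /eqP; rewrite (negbTE ky).
- move=> S cS [q [qnz Hq]].
  have cC : #|~: S| = 1%N.
    by apply/eqP; rewrite -(eqn_add2l #|S|) cardsC cS card_ord.
  move/eqP: cC => /cards1P [k Hk].
  have inS : forall x, (x \in S) = (x != k).
    by move=> x; rewrite -[S]setCK Hk !inE.
  have hsum : \sum_(a <- [seq phi (r i) | i <- enum S]) a = 0.
    apply: (@conic_sum C q) => //.
    + by rewrite size_map -cardE cS.
    + by rewrite (map_inj_uniq pinj) enum_uniq.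
    + by move=> a /mapP [x]; rewrite mem_enum => xS ->; apply: Hq.
  move: hsum; rewrite big_map big_enum /= -rmorph_sum => /eqP; rewrite fmorph_eq0 => /eqP hs.
  have tot : \sum_i r i = r k.
    rewrite (bigD1 k) //=.
    have -> : \sum_(i | i != k) r i = \sum_(i in S) r i.
      by apply: eq_bigl => x; rewrite inS.
    by rewrite hs addr0.
  have c1 : (#|[set k]| <= 3)%N by rewrite cards1.
  have [y] := exists_notin _ c1; rewrite inE => yk.
  have c2 : (#|[set k; y]| <= 3)%N.
    by apply: (leq_trans (leq_card_setU _ _)); rewrite !cards1.
  have [i] := exists_notin _ c2; rewrite !inE negb_or => /andP [ik iy].
  have c3 : (#|[set k; y; i]| <= 3)%N.
    apply: (leq_trans (leq_card_setU _ _)); rewrite cards1 addn1 ltnS.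
    by apply: (leq_trans (leq_card_setU _ _)); rewrite !cards1.
  have [j] := exists_notin _ c3; rewrite !inE !negb_or => /andP [/andP [jk jy] ji].
  have ky : k != y by rewrite eq_sym.
  have ij : i != j by rewrite eq_sym.
  have [g Hg] := gal_step hG _ _ _ _ ij ky.
  have sk : (tperm i j * tperm k y)%g k = y.
    by rewrite permM (tpermD ik jk) tpermL.
  have gS : g (\sum_i r i) = \sum_i g (r i) by apply: linear_sum.
  have := congr1 g tot; rewrite gS Hg sk.
  under eq_bigr do rewrite Hg.
  have e : \sum_i0 r ((tperm i j * tperm k y)%g i0) = \sum_i0 r i0.
    by rewrite [RHS](reindex_inj (@perm_inj _ (tperm i j * tperm k y)%g)).
  rewrite e tot.
  by move/rinj => /eqP; rewrite (negbTE ky).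
Qed.
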